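(* Let $L$ be a normal modal logic with the finite model property, and let $f$ be an arrow of the category $L\mathbf{KFr}_{lf}$. Then $f$ is an epimorphism in $L\mathbf{KFr}_{lf}$ if and only if it is surjective, and $f$ is a regular monomorphism in $L\mathbf{KFr}_{lf}$ if and only if it is injective. Moreover, the coregular factorization of $f$ (factor $f$ through the equalizer of its cokernel pair) is an epimorphism followed by a regular monomorphism.
   Context: $L\mathbf{KFr}_{lf}$ is the category whose objects are locally finite Kripke frames $(W,\prec)$ validating $L$ (locally finite: for each $w$ the set of points reachable from $w$ by finite $\prec$-paths is finite) and whose arrows are p-morphisms: maps $f:W\to V$ with $w\prec w'\Rightarrow f(w)\prec f(w')$ and, whenever $f(w)\prec v'$, there is $w'$ with $w\prec w'$ and $f(w')=v'$. This category is complete and cocomplete. *)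

(* Defs.v *)
From Stdlib Require Import List.
Import ListNotations.

Inductive form : Type :=
| Var : nat -> form
| Bot : form
| Imp : form -> form -> form
| Box : form -> form.

(** Classical tautologies: formulas true under every Boolean valuation in
    which propositional variables and boxed subformulas are treated as atoms. *)
Fixpoint beval (v : form -> bool) (p : form) : bool :=
  match p with
  | Var n => v (Var n)
  | Bot => false
  | Imp a b => orb (negb (beval v a)) (beval v b)
  | Box a => v (Box a)
  end.

Definition tautology (p : form) : Prop := forall v : form -> bool, beval v p = true.

Fixpoint subst (s : nat -> form) (p : form) : form :=
  match p with
  | Var n => s n
  | Bot => Bot
  | Imp a b => Imp (subst s a) (subst s b)
  | Box a => Box (subst s a)
  end.

Definition normal_logic (L : form -> Prop) : Prop :=
  (forall p, tautology p -> L p) /\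
  (forall p q, L (Imp (Box (Imp p q)) (Imp (Box p) (Box q)))) /\
  (forall p q, L p -> L (Imp p q) -> L q) /\
  (forall p, L p -> L (Box p)) /\
  (forall s p, L p -> L (subst s p)).

Record frame : Type := Frame {
  carrier :> Type;
  rel : carrier -> carrier -> Prop
}.

Fixpoint sat (F : frame) (V : nat -> carrier F -> Prop) (w : carrier F) (p : form)
  : Prop :=
  match p with
  | Var n => V n w
  | Bot => False
  | Imp a b => sat F V w a -> sat F V w b
  | Box a => forall w', rel F w w' -> sat F V w' a
  end.

Definition frame_valid (F : frame) (p : form) : Prop :=
  forall (V : nat -> carrier F -> Prop) (w : carrier F), sat F V w p.

Definition validates (L : form -> Prop) (F : frame) : Prop :=
  forall p, L p -> frame_valid F p.

Definition finite_frame (F : frame) : Prop :=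
  exists l : list (carrier F), forall w, In w l.

Definition fmp (L : form -> Prop) : Prop :=
  forall p, ~ L p -> exists F : frame, finite_frame F /\ validates L F /\ ~ frame_valid F p.

Inductive reach (F : frame) (w : carrier F) : carrier F -> Prop :=
| reach_refl : reach F w w
| reach_step : forall u v, reach F w u -> rel F u v -> reach F w v.

Definition locally_finite (F : frame) : Prop :=
  forall w : carrier F, exists l : list (carrier F), forall v, reach F w v -> In v l.

Definition LKFr_lf (L : form -> Prop) (F : frame) : Prop :=
  validates L F /\ locally_finite F.

Definition pmorph (F G : frame) (f : carrier F -> carrier G) : Prop :=
  (forall w w', rel F w w' -> rel G (f w) (f w')) /\
  (forall w v', rel G (f w) v' -> exists w', rel F w w' /\ f w' = v').

(** * Categorical notions in L KFr_lf (equality of arrows = pointwise) *)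

Definition epi_in (L : form -> Prop) (F G : frame) (f : carrier F -> carrier G) : Prop :=
  forall (H : frame), LKFr_lf L H ->
  forall g h : carrier G -> carrier H, pmorph G H g -> pmorph G H h ->
  (forall x, g (f x) = h (f x)) -> forall y, g y = h y.

Definition is_equalizer (L : form -> Prop) (E F G : frame)
  (e : carrier E -> carrier F) (g h : carrier F -> carrier G) : Prop :=
  pmorph E F e /\
  (forall x, g (e x) = h (e x)) /\
  (forall (U : frame), LKFr_lf L U ->
   forall k : carrier U -> carrier F, pmorph U F k ->
   (forall x, g (k x) = h (k x)) ->
   exists u : carrier U -> carrier E,
     pmorph U E u /\ (forall x, e (u x) = k x) /\
     (forall u' : carrier U -> carrier E, pmorph U E u' ->
        (forall x, e (u' x) = k x) -> forall x, u' x = u x)).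

Definition regular_mono_in (L : form -> Prop) (F G : frame)
  (f : carrier F -> carrier G) : Prop :=
  exists (H : frame) (g h : carrier G -> carrier H),
    LKFr_lf L H /\ pmorph G H g /\ pmorph G H h /\ is_equalizer L F G H f g h.

Definition is_cokernel_pair (L : form -> Prop) (F G P : frame)
  (f : carrier F -> carrier G) (i1 i2 : carrier G -> carrier P) : Prop :=
  pmorph G P i1 /\ pmorph G P i2 /\
  (forall x, i1 (f x) = i2 (f x)) /\
  (forall (Q : frame), LKFr_lf L Q ->
   forall j1 j2 : carrier G -> carrier Q, pmorph G Q j1 -> pmorph G Q j2 ->
   (forall x, j1 (f x) = j2 (f x)) ->
   exists u : carrier P -> carrier Q,
     pmorph P Q u /\ (forall y, u (i1 y) = j1 y) /\ (forall y, u (i2 y) = j2 y) /\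
     (forall u' : carrier P -> carrier Q, pmorph P Q u' ->
        (forall y, u' (i1 y) = j1 y) -> (forall y, u' (i2 y) = j2 y) ->
        forall z, u' z = u z)).

Definition surj {A B : Type} (f : A -> B) : Prop := forall b, exists a, f a = b.
Definition inj {A B : Type} (f : A -> B) : Prop := forall a a', f a = f a' -> a = a'.

(* Main.v *)
Require Import Defs.
From Stdlib Require Import List Classical ClassicalEpsilon ProofIrrelevance.
Import ListNotations.

Lemma sat_ext (F : frame) V V' : (forall n x, V n x <-> V' n x) ->
  forall p w, sat F V w p <-> sat F V' w p.
Proof.
  intros HV p; induction p as [n| |p1 IH1 p2 IH2|p IH]; intros w; simpl.
  - apply HV.
  - tauto.
  - specialize (IH1 w); specialize (IH2 w); tauto.
  - split; intros H w' Hw; apply IH; auto.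
Qed.

Lemma sat_pmorph (F G : frame) (f : carrier F -> carrier G) : pmorph F G f ->
  forall V p w, sat G V (f w) p <-> sat F (fun n x => V n (f x)) w p.
Proof.
  intros [Hf Hb] V p; induction p as [n| |p1 IH1 p2 IH2|p IH]; intros w; simpl.
  - tauto.
  - tauto.
  - specialize (IH1 w); specialize (IH2 w); tauto.
  - split.
    + intros H w' Hw. apply IH. apply H. apply Hf; auto.
    + intros H v' Hv. destruct (Hb w v' Hv) as [w' [Hw' <-]]. apply IH. apply H; auto.
Qed.

Lemma reach_trans (F : frame) a b c : reach F a b -> reach F b c -> reach F a c.
Proof. intros H1 H2; induction H2; auto. econstructor; eauto. Qed.

Lemma reach_one (F : frame) a b : rel F a b -> reach F a b.
Proof. intros H; econstructor; [constructor|exact H]. Qed.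

Lemma lkfr_cover L (H : frame) :
  (forall w : carrier H, exists (K : frame) (pi : carrier K -> carrier H) k,
       LKFr_lf L K /\ pmorph K H pi /\ pi k = w) -> LKFr_lf L H.
Proof.
  intros Hc. split.
  - intros p Lp V w. destruct (Hc w) as [K [pi [k [[HK _] [Hpi <-]]]]].
    apply (sat_pmorph K H pi Hpi). apply HK; auto.
  - intros w. destruct (Hc w) as [K [pi [k [[_ HK] [Hpi <-]]]]].
    destruct (HK k) as [l Hl]. exists (map pi l). intros v Hv.
    assert (exists k', reach K k k' /\ pi k' = v) as [k' [Hr <-]].
    { induction Hv as [|u v Hr IHr Huv].
      - exists k; split; [constructor|auto].
      - destruct IHr as [k1 [Hr1 <-]]. destruct Hpi as [_ Hb].
        destruct (Hb k1 v Huv) as [k2 [Hk2 <-]].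
        exists k2; split; auto. econstructor; eauto. }
    apply in_map; auto.
Qed.

Lemma list_pullback {A B} (i : A -> B) : inj i ->
  forall l : list B, exists l' : list A, forall a, In (i a) l -> In a l'.
Proof.
  intros Hi l; induction l as [|x l IH].
  - exists []; simpl; tauto.
  - destruct IH as [l' Hl']. destruct (classic (exists a, i a = x)) as [[a0 Ha0]|Hn].
    + exists (a0 :: l'). intros a [Ha|Ha]; [left; apply Hi; congruence | right; auto].
    + exists l'. intros a [Ha|Ha]; [exfalso; eauto | auto].
Qed.

Lemma lkfr_sub L (K G : frame) (i : carrier K -> carrier G) :
  pmorph K G i -> inj i -> LKFr_lf L G -> LKFr_lf L K.
Proof.
  intros Hi Hinj [HG HGl]. split.
  - intros p Lp V w.
    pose (V' := fun n x => exists k, i k = x /\ V n k).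
    apply (sat_ext K (fun n x => V' n (i x))).
    + intros n x; split.
      * intros [k [Hk HV]]. apply Hinj in Hk. subst; auto.
      * intros HV; exists x; auto.
    + apply (sat_pmorph K G i Hi). apply HG; auto.
  - intros w. destruct (HGl (i w)) as [l Hl].
    destruct (list_pullback i Hinj l) as [l' Hl']. exists l'.
    intros v Hv. apply Hl'. apply Hl.
    induction Hv as [|u v Hr IHr Huv]; [constructor|].
    econstructor; [exact IHr|]. apply (proj1 Hi); auto.
Qed.

Lemma pmorph_comp (A B C : frame) (f : carrier A -> carrier B) (g : carrier B -> carrier C) :
  pmorph A B f -> pmorph B C g -> pmorph A C (fun x => g (f x)).
Proof.
  intros [Hf Hfb] [Hg Hgb]. split; auto.
  intros w v' Hv. destruct (Hgb (f w) v' Hv) as [b [Hb <-]].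
  destruct (Hfb w b Hb) as [a [Ha <-]]. eauto.
Qed.

Lemma pmorph_id (A : frame) : pmorph A A (fun x => x).
Proof. split; eauto. Qed.

Section Dbl.
Variable G : frame.
Variable S : carrier G -> Prop.

Definition dbl_carrier := (carrier G + {x : carrier G | ~ S x})%type.
Definition dbl_rel (a b : dbl_carrier) : Prop :=
  match a, b with
  | inl a, inl b => rel G a b
  | inr a, inl b => rel G (proj1_sig a) b /\ S b
  | inr a, inr b => rel G (proj1_sig a) (proj1_sig b)
  | inl _, inr _ => False
  end.
Definition dbl := Frame dbl_carrier dbl_rel.
Definition dg (x : carrier G) : carrier dbl := inl x.
Definition dh (x : carrier G) : carrier dbl :=
  match excluded_middle_informative (S x) with
  | left _ => inl x
  | right n => inr (exist _ x n)
  end.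

Lemma dh_S x : S x -> dh x = inl x.
Proof. intros Hs; unfold dh; destruct (excluded_middle_informative (S x)); [reflexivity|contradiction]. Qed.

Lemma dh_nS x (n : ~ S x) : dh x = inr (exist _ x n).
Proof.
  unfold dh; destruct (excluded_middle_informative (S x)) as [s|n'].
  - contradiction.
  - f_equal. f_equal. apply proof_irrelevance.
Qed.

Hypothesis Sup : forall x y, rel G x y -> S x -> S y.

Lemma dg_pm : pmorph G dbl dg.
Proof.
  split; simpl; auto.
  intros w [b|b] Hv; simpl in Hv; [exists b; auto | tauto].
Qed.

Lemma dh_pm : pmorph G dbl dh.
Proof.
  split.
  - intros w w' Hw.
    destruct (classic (S w)) as [s|n].
    + rewrite (dh_S w s), (dh_S w' (Sup _ _ Hw s)). simpl; auto.
    + rewrite (dh_nS w n). destruct (classic (S w')) as [s'|n'].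
      * rewrite (dh_S w' s'); simpl; auto.
      * rewrite (dh_nS w' n'); simpl; auto.
  - intros w v' Hv. destruct (classic (S w)) as [s|n].
    + rewrite (dh_S w s) in Hv. destruct v' as [b|b]; simpl in Hv; [|tauto].
      exists b; split; auto. apply dh_S. eauto.
    + rewrite (dh_nS w n) in Hv. destruct v' as [b|[b nb]]; simpl in Hv.
      * destruct Hv as [Hv sb]. exists b; split; auto. apply dh_S; auto.
      * exists b; split; auto. apply dh_nS.
Qed.

Lemma dbl_lkfr L : LKFr_lf L G -> LKFr_lf L dbl.
Proof.
  intros HG. apply lkfr_cover. intros [x|[x n]].
  - exists G, dg, x. split; auto. split; auto. apply dg_pm.
  - exists G, dh, x. split; auto. split; [apply dh_pm|]. apply dh_nS.
Qed.

Lemma dg_dh x : dg x = dh x -> S x.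
Proof.
  intros E. destruct (classic (S x)) as [s|n]; auto.
  rewrite (dh_nS x n) in E. discriminate.
Qed.
End Dbl.

Lemma im_up (F G : frame) (f : carrier F -> carrier G) : pmorph F G f ->
  forall x y, rel G x y -> (exists a, f a = x) -> exists a, f a = y.
Proof.
  intros [_ Hb] x y Hr [a <-]. destruct (Hb a y Hr) as [a' [_ <-]]. eauto.
Qed.

Lemma reach_im (F G : frame) (f : carrier F -> carrier G) : pmorph F G f ->
  forall a y, reach G (f a) y -> exists b, f b = y.
Proof.
  intros Hf a y Hr. induction Hr as [|u v Hr IHr Huv]; eauto.
  eapply im_up; eauto.
Qed.

Lemma surj_epi L (F G : frame) (f : carrier F -> carrier G) : surj f -> epi_in L F G f.
Proof. intros Hs H _ g h _ _ E y. destruct (Hs y) as [a <-]. auto. Qed.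

Lemma epi_surj L (F G : frame) (f : carrier F -> carrier G) :
  LKFr_lf L G -> pmorph F G f -> epi_in L F G f -> surj f.
Proof.
  intros HG Hf He y. apply NNPP; intros Hn.
  pose (S := fun x => exists a, f a = x).
  assert (Sup : forall x y, rel G x y -> S x -> S y) by (apply im_up; auto).
  apply Hn. apply (dg_dh G S).
  apply (He (dbl G S) (dbl_lkfr G S Sup L HG) _ _ (dg_pm G S) (dh_pm G S Sup)).
  intros x. symmetry. apply dh_S. exists x; auto.
Qed.

Lemma equalizer_inj L (F G H : frame) (f : carrier F -> carrier G) g h :
  LKFr_lf L F -> LKFr_lf L G -> is_equalizer L F G H f g h -> inj f.
Proof.
  intros HF HG [Hf [Heq Hu]].
  pose (P := fun x => forall y, reach G x y -> g y = h y).
  pose (E0 := Frame {x : carrier G | P x}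
                (fun a b => rel G (proj1_sig a) (proj1_sig b))).
  assert (Hinj : inj (fun z : carrier E0 => proj1_sig z)).
  { intros [a pa] [b pb]; simpl; intros ->; f_equal; apply proof_irrelevance. }
  assert (Hincl : pmorph E0 G (fun z : carrier E0 => proj1_sig z)).
  { split; simpl; auto.
    intros [w pw] v' Hv; simpl in *.
    assert (pv : P v').
    { intros y Hy. apply pw. eapply reach_trans; [apply reach_one; exact Hv|exact Hy]. }
    exists (exist _ v' pv); simpl; auto. }
  assert (HE0 : LKFr_lf L E0) by (eapply lkfr_sub; eauto).
  destruct (Hu E0 HE0 _ Hincl) as [u [Hupm [Hue _]]].
  { intros [x px]; simpl. apply px. constructor. }
  assert (Pf : forall x, P (f x)).
  { intros x y Hy. destruct (reach_im F G f Hf x y Hy) as [b <-]. auto. }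
  pose (v := fun x => exist P (f x) (Pf x) : carrier E0).
  assert (Hv : pmorph F E0 v).
  { split.
    - intros w w' Hw. simpl. apply (proj1 Hf); auto.
    - intros w v' Hr. simpl in Hr. destruct (proj2 Hf w _ Hr) as [w' [Hw' Hfw']].
      exists w'; split; [exact Hw'|]. apply Hinj. simpl. auto. }
  destruct (Hu F HF f Hf Heq) as [u0 [_ [_ Hun]]].
  assert (H1 : forall x, u (v x) = u0 x).
  { apply Hun. apply pmorph_comp; auto. intros x. rewrite Hue. reflexivity. }
  assert (H2 : forall x, x = u0 x).
  { apply (Hun (fun x => x)); auto. apply pmorph_id. }
  intros a a' Ea.
  assert (v a = v a') by (apply Hinj; simpl; auto).
  rewrite (H2 a), (H2 a'), <- (H1 a), <- (H1 a'). congruence.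
Qed.

Lemma inj_regular L (F G : frame) (f : carrier F -> carrier G) :
  LKFr_lf L G -> pmorph F G f -> inj f -> regular_mono_in L F G f.
Proof.
  intros HG Hf Hi.
  pose (S := fun x => exists a, f a = x).
  assert (Sup : forall x y, rel G x y -> S x -> S y) by (apply im_up; auto).
  exists (dbl G S), (dg G S), (dh G S).
  split; [apply dbl_lkfr; auto|]. split; [apply dg_pm|]. split; [apply dh_pm; auto|].
  split; [auto|]. split.
  { intros x. symmetry. apply dh_S. exists x; auto. }
  intros U HU k Hk Hgk.
  assert (Hs : forall x, S (k x)) by (intros x; apply (dg_dh G S), Hgk).
  pose (u := fun x => proj1_sig (constructive_indefinite_description _ (Hs x))).
  assert (Hue : forall x, f (u x) = k x).
  { intros x. unfold u. destruct (constructive_indefinite_description _ (Hs x)); auto. }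
  exists u. split; [|split].
  - split.
    + intros w w' Hw. apply (proj1 Hk) in Hw. rewrite <- !Hue in Hw.
      destruct (proj2 Hf _ _ Hw) as [b [Hb Eb]]. apply Hi in Eb. subst; auto.
    + intros w a' Hr. apply (proj1 Hf) in Hr. rewrite Hue in Hr.
      destruct (proj2 Hk _ _ Hr) as [x' [Hx' Ex']]. exists x'; split; auto.
      apply Hi. rewrite Hue; auto.
  - auto.
  - intros u' _ Hu' x. apply Hi. rewrite Hu', Hue; auto.
Qed.

Theorem proposition5p1 :
  forall (L : form -> Prop), normal_logic L -> fmp L ->
  forall (F G : frame), LKFr_lf L F -> LKFr_lf L G ->
  forall f : carrier F -> carrier G, pmorph F G f ->
    (epi_in L F G f <-> surj f) /\
    (regular_mono_in L F G f <-> inj f) /\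
    (forall (P : frame) (i1 i2 : carrier G -> carrier P),
       LKFr_lf L P -> is_cokernel_pair L F G P f i1 i2 ->
     forall (E : frame) (e : carrier E -> carrier G),
       LKFr_lf L E -> is_equalizer L E G P e i1 i2 ->
     forall m : carrier F -> carrier E, pmorph F E m ->
       (forall x, e (m x) = f x) ->
       epi_in L F E m /\ regular_mono_in L E G e).
Proof.
  intros L _ _ F G HF HG f Hf. split; [|split].
  - split; [apply epi_surj; auto | apply surj_epi].
  - split.
    + intros [H [g [h [_ [_ [_ Heq]]]]]]. eapply equalizer_inj; eauto.
    + apply inj_regular; auto.
  - intros P i1 i2 HP Hcok E e HE Heq m Hm Hme. split.
    + apply surj_epi. intros z.
      pose (S := fun x => exists a, f a = x).
      assert (Sup : forall x y, rel G x y -> S x -> S y) by (apply im_up; auto).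
      assert (Hs : S (e z)).
      { destruct Hcok as [Hi1 [Hi2 [Hif Hu]]].
        destruct (Hu (dbl G S) (dbl_lkfr G S Sup L HG) _ _ (dg_pm G S) (dh_pm G S Sup))
          as [u [_ [Hu1 [Hu2 _]]]].
        { intros x. symmetry. apply dh_S. exists x; auto. }
        apply (dg_dh G S). rewrite <- Hu1, <- Hu2. f_equal. apply (proj1 (proj2 Heq)). }
      destruct Hs as [a Ha]. exists a.
      apply (equalizer_inj L E G P e i1 i2 HE HG Heq). rewrite Hme; auto.
    + exists P, i1, i2. destruct Hcok as [Hi1 [Hi2 _]]. auto.
Qed.
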